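(* Let $h,w\ge 4$ and $G=C_w(U)\sqcap C_h$ with $U=\{i\}$ for some $i\in\{1,\dots,w\}$. Then $Z(G)\le h+2$.
   Context: All graphs are finite, simple and undirected. Zero forcing: given a graph $G$ and a set $S\subseteq V(G)$ of initially filled vertices, the color change rule says that if a filled vertex $v$ has exactly one unfilled neighbor $u$, then $v$ forces $u$ to become filled. $S$ is a zero forcing set if repeatedly applying this rule eventually fills every vertex of $G$. The zero forcing number $Z(G)$ is the minimum cardinality of a zero forcing set of $G$. The cycle $C_n$ ($n\ge3$) has vertex set $\{1,\dots,n\}$ and edges $\{k,k+1\}$ for $1\le k\le n-1$ together with $\{n,1\}$. Generalized hierarchical product: for graphs $W,H$ and $U\subseteq V(W)$ (the root set), $W(U)\sqcap H$ is the graph with vertex set $V(W)\times V(H)$ in which $(x_1,y_1)$ and $(x_2,y_2)$ are adjacent iff either ($x_1=x_2\in U$ and $y_1y_2\in E(H)$) or ($y_1=y_2$ and $x_1x_2\in E(W)$). *)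

(* Defs.v *)
From mathcomp Require Import all_boot.
From Stdlib Require Import ClassicalEpsilon.
Set Implicit Arguments. Unset Strict Implicit. Unset Printing Implicit Defensive.

Section ZF.
Variable T : finType.
Variable e : rel T.

Definition forces (F : {set T}) (v u : T) : bool :=
  [&& v \in F, u \notin F, e v u &
      [forall x, (e v x && (x \notin F)) ==> (x == u)]].

Inductive zf_reach : {set T} -> {set T} -> Prop :=
| zf_refl F : zf_reach F F
| zf_step F v u F' : forces F v u -> zf_reach (u |: F) F' -> zf_reach F F'.

Definition zero_forcing_set (S : {set T}) : Prop := zf_reach S setT.

Lemma setT_zero_forcing : zero_forcing_set setT.
Proof. exact: zf_refl. Qed.

Definition zero_forcing_setb (S : {set T}) : bool :=
  if excluded_middle_informative (zero_forcing_set S) then true else false.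

Definition zero_forcing_number : nat :=
  #|[arg min_(S < setT | zero_forcing_setb S) #|S|]|.
End ZF.

(* cycle C_n on 'I_n (vertex k+1 of the paper is k here): k ~ k+1 mod n *)
Definition cycle_rel (n : nat) : rel 'I_n :=
  fun a b => (3 <= n) && ((b == (a.+1 %% n) :> nat) || (a == (b.+1 %% n) :> nat)).

Definition hprod_rel (A B : finType) (eW : rel A) (U : {set A}) (eH : rel B)
  : rel (A * B) :=
  fun p q => ((p.1 == q.1) && (p.1 \in U) && eH p.2 q.2)
          || ((p.2 == q.2) && eW p.1 q.1).

(* Main.v *)
Require Import Defs.
From mathcomp Require Import all_boot.
From mathcomp Require Import zify.
From Stdlib Require Import ClassicalEpsilon.
Set Implicit Arguments. Unset Strict Implicit. Unset Printing Implicit Defensive.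

Section General.
Variable T : finType.
Variable e : rel T.

Lemma zf_mono_gen F G : zf_reach e F G -> G = setT ->
  forall F' : {set T}, F \subset F' -> zf_reach e F' setT.
Proof.
elim=> {F G} [F -> F' sF | F v u G Hf _ IH eG F' sF].
  by move: sF; rewrite subTset => /eqP ->; exact: zf_refl.
case: (boolP (u \in F')) => Hu.
  by apply: (IH eG); rewrite subUset sub1set Hu sF.
move: Hf => /and4P [vF uF evu /forallP Hall].
apply: (@zf_step _ _ _ v u).
  apply/and4P; split => //; first exact: (subsetP sF).
  apply/forallP => x; apply/implyP => /andP [evx xF].
  apply: (implyP (Hall x)); rewrite evx /=.
  by apply: contra xF; apply: (subsetP sF).
by apply: (IH eG); exact: setUS.
Qed.

Lemma zf_mono (F F' : {set T}) : F \subset F' -> zf_reach e F setT -> zf_reach e F' setT.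
Proof. by move=> s H; exact: (zf_mono_gen H erefl s). Qed.

Lemma zf_back (F : {set T}) v u : v \in F -> e v u ->
  (forall x, e v x -> x != u -> x \in F) ->
  zf_reach e (u |: F) setT -> zf_reach e F setT.
Proof.
move=> vF evu Hn H.
case: (boolP (u \in F)) => Hu.
  by apply: (zf_mono _ H); rewrite subUset sub1set Hu subxx.
apply: (@zf_step _ _ _ v u) => //.
apply/and4P; split => //.
apply/forallP => x; apply/implyP => /andP [evx xF].
by apply/negPn; apply: contra xF; exact: Hn.
Qed.

Lemma zfn_le (S : {set T}) : zero_forcing_set e S -> zero_forcing_number e <= #|S|.
Proof.
move=> HS; rewrite /zero_forcing_number.
have P0 : zero_forcing_setb e setT.
  by rewrite /zero_forcing_setb; case: excluded_middle_informative => // [[]];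
     exact: setT_zero_forcing.
case: arg_minnP => // A _; apply.
by rewrite /zero_forcing_setb; case: excluded_middle_informative.
Qed.
End General.

Lemma mod2 x w : x < 2*w -> (x %% w = x /\ x < w) \/ (x %% w = x - w /\ w <= x).
Proof.
move=> H; case: (ltnP x w) => Hx; [left; split=> //; exact: modn_small|right; split=>//].
rewrite -{1}(subnK Hx) modnDr modn_small //; lia.
Qed.

Lemma arith_row i m w a : i < w -> a < w -> 1 <= m <= w-1 ->
 (a = ((i+m)%%w).+1 %% w \/ (i+m)%%w = a.+1 %% w) -> a = (i+(m+1))%%w \/ a = (i+(m-1))%%w.
Proof.
move=> iw aw mw.
have := @mod2 (i+m) w ltac:(lia).
move: ((i+m)%%w) => t Ht.
have := @mod2 t.+1 w ltac:(lia).
have := @mod2 a.+1 w ltac:(lia).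
have := @mod2 (i+(m+1)) w ltac:(lia).
have := @mod2 (i+(m-1)) w ltac:(lia).
move: (t.+1 %% w) (a.+1 %% w) ((i+(m+1))%%w) ((i+(m-1))%%w) => x1 x2 x3 x4.
lia.
Qed.

Lemma arith_ne i m w : i < w -> 1 <= m <= w-1 -> (i+m)%%w <> i.
Proof.
move=> iw mw; have := @mod2 (i+m) w ltac:(lia); move: ((i+m)%%w) => t; lia.
Qed.

Lemma arith_succ i m w : i < w -> m < w -> (i+(m+1))%%w = ((i+m)%%w).+1 %% w.
Proof.
move=> iw mw.
have := @mod2 (i+m) w ltac:(lia).
move: ((i+m)%%w) => t Ht.
have := @mod2 t.+1 w ltac:(lia).
have := @mod2 (i+(m+1)) w ltac:(lia).
move: (t.+1 %% w) ((i+(m+1))%%w) => x1 x2.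
lia.
Qed.

Lemma arith_all i w a : i < w -> a < w -> exists j, j <= w-1 /\ a = (i+j)%%w.
Proof.
move=> iw aw; case: (leqP i a) => ia.
  exists (a - i); split; first lia.
  by rewrite subnKC // modn_small.
exists (a + w - i); split; first lia.
have -> : i + (a + w - i) = a + w by lia.
by rewrite modnDr modn_small.
Qed.

Lemma arith_col h k b : 1 <= k -> k + 1 < h -> b < h ->
  (b = k.+1 %% h \/ k = b.+1 %% h) -> b = k+1 \/ b = k-1.
Proof.
move=> k1 kh bh.
have := @mod2 k.+1 h ltac:(lia).
have := @mod2 b.+1 h ltac:(lia).
move: (k.+1 %% h) (b.+1 %% h) => x1 x2; lia.
Qed.

Section Main.
Variables (w h : nat) (i : 'I_w).
Hypotheses (hw : 4 <= w) (hh : 4 <= h).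

Let T := ('I_w * 'I_h)%type.
Let E := hprod_rel (@cycle_rel w) [set i] (@cycle_rel h).

Let wpos : 0 < w. Proof. lia. Qed.
Definition off (j : nat) : 'I_w := Ordinal (ltn_pmod (i + j) wpos).

Lemma off0 : off 0 = i.
Proof. by apply: val_inj; rewrite /= addn0 modn_small. Qed.

Lemma row_fill (k : 'I_h) m (F : {set T}) : 1 <= m <= w-1 ->
  (forall j, j <= m -> (off j, k) \in F) ->
  zf_reach E (F :|: [set p | p.2 == k]) setT -> zf_reach E F setT.
Proof.
move=> Hm; move Hn : (w - 1 - m) => n.
elim: n m F Hm Hn => [|n IH] m F Hm Hn HF Hr.
  apply: (zf_mono _ Hr); rewrite subUset subxx /=.
  apply/subsetP => [[a b]]; rewrite inE /= => /eqP ->.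
  have [j [jw ->]] : exists j, j <= w-1 /\ a = off j.
    have [j [jw ea]] := arith_all (ltn_ord i) (ltn_ord a).
    by exists j; split => //; apply: val_inj.
  apply: HF; lia.
have im : i < w := ltn_ord i.
apply: (@zf_back _ _ _ (off m, k) (off (m+1), k)).
- by apply: HF.
- rewrite /E /hprod_rel /= eqxx /=; apply/orP; right.
  rewrite /cycle_rel /=; apply/andP; split; first lia.
  by apply/orP; left; rewrite arith_succ //; lia.
- move=> [a b]; rewrite /E /hprod_rel /= inE.
  have -> : (off m == i) = false.
    by apply/eqP => /(congr1 val) /=; apply: arith_ne; lia.
  rewrite andbF /= => /andP [/eqP <- ]; rewrite /cycle_rel /= => /andP [_ /orP H] ne.
  have H' : (a:nat) = ((i+m)%%w).+1 %% w \/ (i+m)%%w = (a:nat).+1 %% w.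
    by case: H => /eqP H; [left|right].
  have [ea|ea] := @arith_row i m w a im (ltn_ord a) ltac:(lia) H'.
    move: ne; rewrite xpair_eqE eqxx andbT.
    have -> : a = off (m+1) by apply: val_inj; rewrite /= ea.
    by rewrite eqxx.
  have -> : a = off (m-1) by apply: val_inj; rewrite /= ea.
  apply: HF; lia.
- apply: (IH (m+1)); first lia; first lia.
    move=> j jm; rewrite !inE; case: (ltnP m j) => mj.
      have -> : j = m+1 by lia.
      by rewrite eqxx.
    by rewrite HF ?orbT.
  apply: (zf_mono _ Hr).
  by apply: setSU; apply/subsetP => x xF; rewrite inE xF orbT.
Qed.

Lemma main_fill k (F : {set T}) : 1 <= k <= h-1 ->
  (forall b, (off 1, b) \in F) ->
  (forall p : T, (p.2 : nat) < k -> p \in F) ->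
  (forall p : T, p.1 = i -> (p.2 : nat) = k -> p \in F) ->
  zf_reach E F setT.
Proof.
move=> Hk; move Hn : (h - 1 - k) => n.
elim: n k F Hk Hn => [|n IH] k F Hk Hn Hc Hlt Hi.
  have kh : k < h by lia.
  pose kk : 'I_h := Ordinal kh.
  apply: (@row_fill kk 1); first lia.
    move=> j j1; case: j j1 => [|[|//]] _; last exact: Hc.
    by rewrite off0; apply: Hi.
  apply: (zf_mono _ (setT_zero_forcing _)).
  apply/subsetP => [[a b]] _; rewrite inE.
  case: (ltnP b k) => bk; first by rewrite Hlt.
  apply/orP; right; rewrite inE /=; apply/eqP/val_inj => /=; have := ltn_ord b; lia.
have kh : k < h by lia.
pose kk : 'I_h := Ordinal kh.
have kh1 : k + 1 < h by lia.
pose kk1 : 'I_h := Ordinal kh1.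
apply: (@row_fill kk 1); first lia.
  move=> j j1; case: j j1 => [|[|//]] _; last exact: Hc.
  by rewrite off0; apply: Hi.
apply: (@zf_back _ _ _ (i, kk) (i, kk1)).
- by rewrite inE; apply/orP; right; rewrite inE.
- rewrite /E /hprod_rel /= eqxx inE eqxx /=; rewrite /cycle_rel /=.
  apply/orP; left; apply/andP; split; first lia.
  by rewrite modn_small ?addn1 ?eqxx // -addn1.
- move=> [a b]; rewrite /E /hprod_rel /= inE => /orP [].
    move=> /andP [/andP [/eqP <- _]]; rewrite /cycle_rel => /andP [_ /orP H] ne.
    have H' : (b:nat) = k.+1 %% h \/ k = (b:nat).+1 %% h.
      by case: H => /eqP H; [left|right].
    have [eb|eb] := @arith_col h k b ltac:(lia) kh1 (ltn_ord b) H'.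
      move: ne; rewrite xpair_eqE eqxx /=.
      have -> : b = kk1 by apply: val_inj; rewrite /= eb.
      by rewrite eqxx.
    by rewrite inE Hlt //= eb; lia.
  move=> /andP [/eqP <- _]; rewrite !inE. by rewrite /= eqxx orbT.
- apply: (IH (k+1)); first lia; first lia.
  + by move=> b; rewrite !inE Hc /= !orbT.
  + move=> [a b] /= bk; rewrite !inE.
    case: (ltnP b k) => bk'; first by rewrite Hlt ?orbT.
    have -> : b = kk by apply: val_inj => /=; lia.
    by rewrite eqxx !orbT.
  + move=> [a b] /= -> eb; rewrite !inE.
    have -> : b = kk1 by apply: val_inj; rewrite /= eb.
    by rewrite eqxx.
Qed.

Lemma main_res : zero_forcing_number E <= h + 2.
Proof.
have h0 : 0 < h by lia.
have h1 : 1 < h by lia.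
pose z0 : 'I_h := Ordinal h0.
pose z1 : 'I_h := Ordinal h1.
pose S0 : {set T} := ((fun b => (off 1, b)) @: [set: 'I_h]) :|: [set (i, z0); (i, z1)].
apply: (@leq_trans #|S0|).
  apply: zfn_le.
  apply: (@row_fill z0 1); first lia.
    move=> j j1; case: j j1 => [|[|//]] _.
      by rewrite off0 !inE eqxx !orbT.
    by rewrite inE; apply/orP; left; apply: imset_f; rewrite inE.
  apply: (@main_fill 1); first lia.
  + by move=> b; rewrite !inE; apply/orP; left; apply/orP; left; apply: imset_f; rewrite inE.
  + move=> [a b] /= b1; rewrite !inE /=.
    have -> : b = z0 by apply: val_inj => /=; lia.
    by rewrite eqxx orbT.
  + move=> [a b] /= -> b1; rewrite !inE /=.
    have -> : b = z1 by apply: val_inj => /=; lia.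
    by rewrite eqxx !orbT.
rewrite /S0; apply: (leq_trans (leq_card_setU _ _)).
apply: leq_add; first by apply: (leq_trans (leq_imset_card _ _)); rewrite cardsT card_ord.
by rewrite cards2; case: (_ != _).
Qed.
End Main.

Theorem mainTheorem4 (w h : nat) (i : 'I_w) :
  4 <= w -> 4 <= h ->
  zero_forcing_number (hprod_rel (@cycle_rel w) [set i] (@cycle_rel h)) <= h + 2.
Proof. by move=> hw hh; apply: main_res. Qed.
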